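(* Let $J_{\mathrm{SK}}\subseteq\mathbb{Z}\mathfrak{S}$ be the $\mathbb{Z}$-span of all $u-v$ with $u,v$ permutations of the same size satisfying $u\equiv_{\mathrm{SK}}v$. Then $J_{\mathrm{SK}}$ is a right ideal and a coideal of the Malvenuto–Reutenauer Hopf algebra $(\mathbb{Z}\mathfrak{S},*,\Delta)$. Consequently, $\mathsf{SPR}:=\mathbb{Z}\mathfrak{S}/J_{\mathrm{SK}}$ is a right $\mathsf{PR}$-module and a quotient coalgebra of $\mathsf{PR}$.
   Context: $\mathbb{Z}\mathfrak{S}=\bigoplus_{n\ge0}\mathbb{Z}\mathfrak{S}_n$, permutations viewed as words. For a word $w$ of length $n$ over a totally ordered alphabet, $\mathrm{alph}(w)$ is its set of letters and $\mathrm{st}(w)\in\mathfrak{S}_n$ is the permutation with $\mathrm{st}(w)(i)<\mathrm{st}(w)(j)$ iff $w_i<w_j$, or $w_i=w_j$ and $i<j$. For $I\subseteq[n]$, $w|_I$ is the subword of $w$ consisting of the letters in $I$. The product and coproduct are: for $w\in\mathfrak{S}_p$, $w'\in\mathfrak{S}_q$, $w*w'=\sum uv$ over all words $u,v$ with $\mathrm{alph}(u)\cup\mathrm{alph}(v)=[p+q]$, $\mathrm{st}(u)=w$, $\mathrm{st}(v)=w'$; and for $w\in\mathfrak{S}_n$, $\Delta(w)=\sum_{i=0}^n\mathrm{st}(w|_{[1,i]})\otimes\mathrm{st}(w|_{[i+1,n]})$. Knuth equivalence $\equiv_{\mathrm{K}}$ on $\mathfrak{S}_n$ is generated by (SK1)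 $\dots xzy\dots\sim\dots zxy\dots$ for $x<y<z$ and (SK2) $\dots yxz\dots\sim\dots yzx\dots$ for $x<y<z$ (adjacent letters). Shifted Knuth equivalence $\equiv_{\mathrm{SK}}$ is generated by (SK1), (SK2) and (SK3): $xy\cdots\sim yx\cdots$ when $x,y$ are the first two letters of the permutation. $J_{\mathrm{K}}$ is the $\mathbb{Z}$-span of $u-v$ with $u\equiv_{\mathrm{K}}v$; it is a Hopf ideal, and $\mathsf{PR}=\mathbb{Z}\mathfrak{S}/J_{\mathrm{K}}$ is the Poirier–Reutenauer Hopf algebra. Since $J_{\mathrm{K}}\subseteq J_{\mathrm{SK}}$, $\mathsf{SPR}$ is a quotient of $\mathsf{PR}$. *)

(* Defs.v *)
From HB Require Import structures.
From mathcomp Require Import all_boot all_order all_algebra.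
From mathcomp Require Import freeg.
From Stdlib Require Import Relation_Operators.

Set Implicit Arguments.
Unset Strict Implicit.
Unset Printing Implicit Defensive.

Import Order.TTheory GRing.Theory Num.Theory.
Local Open Scope ring_scope.

Definition is_perm (w : seq nat) : bool := perm_eq w (iota 1 (size w)).

(* standardization st(w): st(w)(i) < st(w)(j) iff w_i < w_j, or
   w_i = w_j and i < j.  Value at position i = 1 + #{j | w_j < w_i or
   (w_j = w_i and j < i)}. *)
Definition st (w : seq nat) : seq nat :=
  [seq (count (fun j => (nth 0 w j < nth 0 w i)%N ||
                        ((nth 0 w j == nth 0 w i) && (j < i)%N))
              (iota 0 (size w))).+1 | i <- iota 0 (size w)].

Definition alph_is (s : seq nat) (n : nat) : bool :=
  all (fun i => i \in s) (iota 1 n) && all (fun i => i \in iota 1 n) s.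

Fixpoint words (n k : nat) : seq (seq nat) :=
  if n is n'.+1 then [seq i :: s | i <- iota 1 k, s <- words n' k]
  else [:: [::]].

Definition restr_le (i : nat) (w : seq nat) := [seq a <- w | (a <= i)%N].
Definition restr_gt (i : nat) (w : seq nat) := [seq a <- w | (i < a)%N].

(* The Z-module ZS = Z S : free abelian group on words; its elements  *)
(* that lie in Z S are those supported on permutations.             *)

Definition ZS := {freeg (seq nat) / int}.
Definition ZS2 := {freeg (seq nat * seq nat) / int}.   (* ZS (x) ZS *)

Definition inZS (x : ZS) : Prop := forall w, w \in dom x -> is_perm w.

Definition mul_basis (w w' : seq nat) : ZS :=
  let p := size w in let q := size w' in
  \sum_(u <- words p (p + q))
    \sum_(v <- words q (p + q) | [&& st u == w, st v == w' & alph_is (u ++ v) (p + q)])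
      << u ++ v >>.

Definition mulZS (x y : ZS) : ZS :=
  \sum_(a <- dom x) \sum_(b <- dom y) mul_basis a b *~ (coeff a x * coeff b y).

Definition cop_basis (w : seq nat) : ZS2 :=
  \sum_(i < (size w).+1) << (st (restr_le i w), st (restr_gt i w)) >>.

Definition copZS (x : ZS) : ZS2 := \sum_(a <- dom x) cop_basis a *~ coeff a x.

Definition counitZS (x : ZS) : int := coeff [::] x.

Inductive knuth_step : seq nat -> seq nat -> Prop :=
| SK1 a b x y z : (x < y)%N -> (y < z)%N ->
    knuth_step (a ++ [:: x; z; y] ++ b) (a ++ [:: z; x; y] ++ b)
| SK2 a b x y z : (x < y)%N -> (y < z)%N ->
    knuth_step (a ++ [:: y; x; z] ++ b) (a ++ [:: y; z; x] ++ b).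

Inductive sknuth_step : seq nat -> seq nat -> Prop :=
| SKK u v : knuth_step u v -> sknuth_step u v
| SK3 x y b : sknuth_step [:: x, y & b] [:: y, x & b].

Definition knuth_equiv := clos_refl_sym_trans (seq nat) knuth_step.
Definition sknuth_equiv := clos_refl_sym_trans (seq nat) sknuth_step.

Definition gen_pair (R : seq nat -> seq nat -> Prop) (u v : seq nat) : Prop :=
  [/\ is_perm u, is_perm v, size u = size v & R u v].

Definition in_span (R : seq nat -> seq nat -> Prop) (x : ZS) : Prop :=
  exists s : seq (int * seq nat * seq nat),
    (forall t, t \in s -> gen_pair R t.1.2 t.2) /\
    x = \sum_(t <- s) (<< t.1.2 >> - << t.2 >>) *~ t.1.1.

Definition J_SK := in_span sknuth_equiv.
Definition J_K := in_span knuth_equiv.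

Definition right_ideal (J : ZS -> Prop) : Prop :=
  (forall x y, J x -> J y -> J (x + y)) /\ J 0 /\
  (forall x c, J x -> J (x *~ c)) /\
  (forall x y, J x -> inZS y -> J (mulZS x y)).

Definition in_JtensZS_plus_ZStensJ (R : seq nat -> seq nat -> Prop) (z : ZS2) : Prop :=
  exists (s1 s2 : seq (int * (seq nat * seq nat) * seq nat)),
    (forall t, t \in s1 -> gen_pair R t.1.2.1 t.1.2.2 /\ is_perm t.2) /\
    (forall t, t \in s2 -> gen_pair R t.1.2.1 t.1.2.2 /\ is_perm t.2) /\
    z = \sum_(t <- s1) (<< (t.1.2.1, t.2) >> - << (t.1.2.2, t.2) >>) *~ t.1.1
      + \sum_(t <- s2) (<< (t.2, t.1.2.1) >> - << (t.2, t.1.2.2) >>) *~ t.1.1.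

Definition coideal (R : seq nat -> seq nat -> Prop) : Prop :=
  (forall x, in_span R x -> in_JtensZS_plus_ZStensJ R (copZS x)) /\
  (forall x, in_span R x -> counitZS x = 0).

(* Main.v *)
Require Import Defs.
From HB Require Import structures.
From mathcomp Require Import all_boot all_order all_algebra.
From mathcomp Require Import freeg.
From mathcomp Require Import zify.
From Stdlib Require Import Relation_Operators.

Set Implicit Arguments.
Unset Strict Implicit.
Unset Printing Implicit Defensive.


Definition rk (w : seq nat) (x : nat) : nat := (count (fun y => y < x) w).+1.

Lemma count_lt_mono w x y : x < y -> x \in w ->
  count (fun z => z < x) w < count (fun z => z < y) w.
Proof.
move=> xy; elim: w => //= a w IH; rewrite inE => /orP[/eqP<-|xw].
  rewrite ltnn xy add0n add1n ltnS; apply: sub_count => z /= h; lia.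
have := IH xw; case: (ltnP a x) => h1; case: (ltnP a y) => h2; lia.
Qed.

Lemma rk_mono w : {in w &, {mono rk w : x y / x < y}}.
Proof.
move=> x y xw yw; rewrite /rk ltnS; case: (ltnP x y) => h.
  exact: count_lt_mono.
apply/negbTE; rewrite -leqNgt; apply: sub_count => z /= h'; lia.
Qed.

Lemma mono_eq (f : nat -> nat) (S : seq nat) : {in S &, {mono f : x y / x < y}} ->
  {in S &, forall x y, (f x == f y) = (x == y)}.
Proof.
move=> hm x y hx hy; apply/eqP/eqP => [e|->//].
case: (ltngtP x y) => // h.
  by move: (hm x y hx hy); rewrite h e ltnn.
by move: (hm y x hy hx); rewrite h e ltnn.
Qed.

Lemma mono_inj (f : nat -> nat) (S : seq nat) : {in S &, {mono f : x y / x < y}} ->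
  {in S &, injective f}.
Proof. by move=> hm x y hx hy /eqP; rewrite (mono_eq hm) // => /eqP. Qed.

Lemma rk_perm w w' : perm_eq w w' -> rk w =1 rk w'.
Proof. by move/permP=> h x; rewrite /rk h. Qed.

Lemma size_st w : size (st w) = size w.
Proof. by rewrite /st size_map size_iota. Qed.

Lemma st_uniq w : uniq w -> st w = map (rk w) w.
Proof.
move=> uw.
have e : map (nth 0 w) (iota 0 (size w)) = w by rewrite map_nth_iota0 // take_size.
transitivity (map (rk w \o nth 0 w) (iota 0 (size w))); last by rewrite map_comp e.
apply/eq_in_map => i; rewrite mem_iota add0n => /andP[_ hi] /=.
rewrite /rk; congr S.
transitivity (count (fun y => y < nth 0 w i) (map (nth 0 w) (iota 0 (size w)))); last by rewrite e.
rewrite count_map.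
apply: eq_in_count => j; rewrite mem_iota add0n => /andP[_ hj] /=.
case: (nth 0 w j < nth 0 w i) => //=.
rewrite nth_uniq //; case: eqP => [->|] //=; by rewrite ltnn.
Qed.

Lemma st_map (f : nat -> nat) (D : seq nat) w : {in D &, {mono f : x y / x < y}} ->
  {subset w <= D} -> st (map f w) = st w.
Proof.
move=> hm hs; rewrite /st size_map; apply/eq_in_map => i; rewrite mem_iota add0n => /andP[_ hi].
congr S; apply: eq_in_count => j; rewrite mem_iota add0n => /andP[_ hj] /=.
rewrite !(nth_map 0) // hm ?(mono_eq hm) //; apply: hs; exact: mem_nth.
Qed.

Lemma perm_iota1 s n : uniq s -> size s = n -> all (fun i => i \in iota 1 n) s ->
  perm_eq s (iota 1 n).
Proof.
move=> us hs /allP ha; apply: uniq_perm; [exact: us|exact: iota_uniq|].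
have hsz : size (iota 1 n) <= size s by rewrite size_iota hs.
exact: (uniq_min_size us ha hsz).2.
Qed.

Lemma rk_bound w x : x \in w -> 0 < rk w x <= size w.
Proof.
move=> xw; rewrite /rk /= -(count_predC (fun y => y < x) w).
have : 0 < count (predC (fun y => y < x)) w.
  by rewrite -has_count; apply/hasP; exists x => //=; rewrite ltnn.
lia.
Qed.

Lemma st_perm w : uniq w -> is_perm (st w).
Proof.
move=> uw; rewrite /is_perm size_st st_uniq //; apply: perm_iota1.
- by rewrite map_inj_in_uniq //; apply: mono_inj (@rk_mono w).
- by rewrite size_map.
- apply/allP => y /mapP [x xw ->]; rewrite mem_iota; move: (rk_bound xw) => /andP[h1 h2]; apply/andP; split => //; rewrite add1n ltnS.
Qed.

Lemma is_perm_uniq a : is_perm a -> uniq a.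
Proof. by move=> h; rewrite (perm_uniq h) iota_uniq. Qed.

Lemma count_lt_iota m n x : count (fun z => z < x) (iota m n) = minn (x - m) n.
Proof.
elim: n m => [|n IH] m /=; first by rewrite minn0.
rewrite IH; case: ltnP => h; lia.
Qed.

Lemma st_perm_id a : is_perm a -> st a = a.
Proof.
move=> ha; rewrite st_uniq ?is_perm_uniq //; apply: map_id_in => x xa.
rewrite (rk_perm ha) /rk count_lt_iota.
have : x \in iota 1 (size a) by rewrite -(perm_mem ha).
rewrite mem_iota; lia.
Qed.

Definition ur (w : seq nat) (i : nat) : nat := nth 0 w (index i (st w)).
Definition phi (c w : seq nat) : seq nat := map (ur w) c.

Section UR.
Variable w : seq nat.
Hypothesis uw : uniq w.

Lemma ur_mem i : i \in st w -> ur w i \in w.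
Proof. by move=> h; rewrite /ur mem_nth // -(size_st w) index_mem. Qed.

Lemma rk_ur i : i \in st w -> rk w (ur w i) = i.
Proof.
move=> h; rewrite /ur -(nth_map 0 0); last by rewrite -(size_st w) index_mem.
by rewrite -st_uniq // nth_index.
Qed.

Lemma rk_inj : {in w &, injective (rk w)}.
Proof. exact: mono_inj (@rk_mono w). Qed.

Lemma rk_in_st y : y \in w -> rk w y \in st w.
Proof. by move=> h; rewrite st_uniq // map_f. Qed.

Lemma ur_rk y : y \in w -> ur w (rk w y) = y.
Proof.
move=> h; apply: rk_inj => //; first exact/ur_mem/rk_in_st.
by rewrite rk_ur // rk_in_st.
Qed.

Lemma ur_mono : {in st w &, {mono ur w : i j / i < j}}.
Proof.
move=> i j hi hj; rewrite -{2}(rk_ur hi) -{2}(rk_ur hj) rk_mono //; exact: ur_mem.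
Qed.

Lemma mem_st i : (i \in st w) = (i \in iota 1 (size w)).
Proof. by rewrite (perm_mem (st_perm uw)) size_st. Qed.

Lemma phi_st : phi (st w) w = w.
Proof.
rewrite /phi {1}st_uniq // -map_comp; apply: map_id_in => y yw /=; exact: ur_rk.
Qed.

Lemma phi_perm c : is_perm c -> size c = size w -> perm_eq (phi c w) w.
Proof.
move=> hc sc; rewrite -{2}phi_st /phi perm_map //.
apply: perm_trans hc _; rewrite sc -(size_st w) perm_sym; exact: st_perm.
Qed.

Lemma sub_st c : is_perm c -> size c = size w -> {subset c <= st w}.
Proof. by move=> hc sc i; rewrite (perm_mem hc) mem_st sc. Qed.

Lemma st_phi c : is_perm c -> size c = size w -> st (phi c w) = c.
Proof.
move=> hc sc; rewrite /phi (st_map ur_mono (sub_st hc sc)) st_perm_id //.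
Qed.

End UR.

Lemma ur_perm w w' : uniq w -> perm_eq w w' -> {in st w, ur w' =1 ur w}.
Proof.
move=> uw hp i hi; have uw' : uniq w' by rewrite -(perm_uniq hp).
have hi' : i \in st w' by rewrite st_uniq // -(eq_map (rk_perm hp)) -(perm_mem (perm_map _ hp)) -st_uniq.
apply: (@rk_inj w).
- by rewrite (perm_mem hp) (ur_mem hi').
- exact: (ur_mem hi).
- by rewrite (rk_perm hp) (rk_ur uw' hi') (rk_ur uw hi).
Qed.

Lemma phi_phi w a c : uniq w -> is_perm a -> size a = size w -> is_perm c -> size c = size w ->
  phi c (phi a w) = phi c w.
Proof.
move=> uw ha sa hc sc; rewrite /phi; apply/eq_in_map => i hi.
apply: ur_perm => //; first by rewrite perm_sym; exact: phi_perm.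
exact: (sub_st uw hc sc hi).
Qed.



Notation crst := (clos_refl_sym_trans (seq nat)).

Lemma crst_gen (R R' : seq nat -> seq nat -> Prop) (I : seq nat -> Prop)
  (h : seq nat -> seq nat) :
  (forall w1 w2, R w1 w2 -> (I w1 <-> I w2)) ->
  (forall w1 w2, R w1 w2 -> I w1 -> crst R' (h w1) (h w2)) ->
  forall w1 w2, crst R w1 w2 -> (I w1 <-> I w2) /\ (I w1 -> crst R' (h w1) (h w2)).
Proof.
move=> hI hR w1 w2; elim=> {w1 w2}.
- move=> x y r; split; [exact: hI| exact: hR].
- by move=> x; split => // _; apply: rst_refl.
- move=> x y _ [h1 h2]; split; first by split; apply h1.
  by move=> hy; apply: rst_sym; apply: h2; apply h1.
- move=> x y z _ [h1 h2] _ [h3 h4]; split; first by split => hh; [apply h3, h1 | apply h1, h3].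
  move=> hx; apply: rst_trans (h2 hx) (h4 _); exact: (proj1 h1 hx).
Qed.

Lemma crst_gen2 (R R' : seq nat -> seq nat -> Prop) (I : seq nat -> Prop)
  (h : seq nat -> seq nat) :
  (forall w1 w2, R w1 w2 -> (I w1 <-> I w2)) ->
  (forall w1 w2, R w1 w2 -> I w1 -> crst R' (h w1) (h w2)) ->
  forall w1 w2, crst R w1 w2 -> I w1 -> crst R' (h w1) (h w2).
Proof. move=> a b w1 w2 hw; exact: (proj2 (crst_gen a b hw)). Qed.

Lemma perm3a (x y z : nat) : perm_eq [:: x; z; y] [:: z; x; y].
Proof. by apply/permP => P /=; lia. Qed.
Lemma perm3b (x y z : nat) : perm_eq [:: y; x; z] [:: y; z; x].
Proof. by apply/permP => P /=; lia. Qed.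

Lemma knuth_perm w1 w2 : knuth_step w1 w2 -> perm_eq w1 w2.
Proof.
by case=> a b x y z _ _; rewrite perm_cat2l perm_cat2r ?perm3a ?perm3b.
Qed.

Lemma sk_perm w1 w2 : sknuth_step w1 w2 -> perm_eq w1 w2.
Proof.
case=> [u v /knuth_perm //|x y b].
by apply/permP => P /=; lia.
Qed.

Lemma knuth_map (f : nat -> nat) (D : seq nat) w1 w2 :
  {in D &, {mono f : x y / x < y}} -> {subset w1 <= D} ->
  knuth_step w1 w2 -> knuth_step (map f w1) (map f w2).
Proof.
move=> hm hs h; case: h hs => a b x y z xy yz hs.
- have hx : x \in D by apply: hs; rewrite !mem_cat !inE eqxx !orbT.
  have hy : y \in D by apply: hs; rewrite !mem_cat !inE eqxx !orbT.
  have hz : z \in D by apply: hs; rewrite !mem_cat !inE eqxx !orbT.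
  rewrite !map_cat /=; apply: SK1; by rewrite hm.
- have hx : x \in D by apply: hs; rewrite !mem_cat !inE eqxx !orbT.
  have hy : y \in D by apply: hs; rewrite !mem_cat !inE eqxx !orbT.
  have hz : z \in D by apply: hs; rewrite !mem_cat !inE eqxx !orbT.
  rewrite !map_cat /=; apply: SK2; by rewrite hm.
Qed.

Lemma sk_map (f : nat -> nat) (D : seq nat) w1 w2 :
  {in D &, {mono f : x y / x < y}} -> {subset w1 <= D} ->
  sknuth_step w1 w2 -> sknuth_step (map f w1) (map f w2).
Proof.
move=> hm hs h; case: h hs => [u v h|x y b] hs; last exact: SK3.
apply: SKK; exact: knuth_map hm hs h.
Qed.

Lemma knuth_appr v w1 w2 : knuth_step w1 w2 -> knuth_step (w1 ++ v) (w2 ++ v).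
Proof. by case=> a b x y z xy yz; rewrite -!catA; constructor. Qed.

Lemma knuth_appl v w1 w2 : knuth_step w1 w2 -> knuth_step (v ++ w1) (v ++ w2).
Proof. by case=> a b x y z xy yz; rewrite !(catA v a); constructor. Qed.

Lemma sk_appr v w1 w2 : sknuth_step w1 w2 -> sknuth_step (w1 ++ v) (w2 ++ v).
Proof.
case=> [u u' h|x y b]; first by apply: SKK; apply: knuth_appr.
exact: SK3.
Qed.

Definition convex (P : pred nat) := forall a b c, a < b -> b < c -> P a -> P c -> P b.

Lemma sk_filter (P : pred nat) w1 w2 : convex P -> sknuth_step w1 w2 ->
  filter P w1 = filter P w2 \/ sknuth_step (filter P w1) (filter P w2).
Proof.
move=> hc; case=> [u v []|x y b].
- move=> a b x y z xy yz; rewrite !filter_cat /=.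
  case Px: (P x); case Py: (P y); case Pz: (P z) => /=; try by left.
  + by right; apply: SKK; apply: SK1.
  + by have := hc _ _ _ xy yz Px Pz; rewrite Py.
- move=> a b x y z xy yz; rewrite !filter_cat /=.
  case Px: (P x); case Py: (P y); case Pz: (P z) => /=; try by left.
  + by right; apply: SKK; apply: SK2.
  + by have := hc _ _ _ xy yz Px Pz; rewrite Py.
- rewrite /=; case Px: (P x); case Py: (P y) => /=; try by left.
  by right; apply: SK3.
Qed.

Lemma sk_equiv_perm w1 w2 : sknuth_equiv w1 w2 -> perm_eq w1 w2.
Proof.
elim=> [x y /sk_perm //|x|x y _ h|x y z _ h1 _ h2].
- exact: perm_refl.
- by rewrite perm_sym.
- exact: perm_trans h1 h2.
Qed.

Lemma sk_equiv_map (f : nat -> nat) (D : seq nat) w1 w2 :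
  {in D &, {mono f : x y / x < y}} -> {subset w1 <= D} ->
  sknuth_equiv w1 w2 -> sknuth_equiv (map f w1) (map f w2).
Proof.
move=> hm hs h.
apply: (@crst_gen2 sknuth_step sknuth_step (fun w => {subset w <= D}) (map f) _ _ w1 w2 h hs).
- move=> u v /sk_perm hp; split => hu x hx; apply: hu; by rewrite ?(perm_mem hp) // -(perm_mem hp).
- move=> u v huv hu; apply: rst_step; exact: sk_map hm hu huv.
Qed.

Lemma knuth_equiv_map (f : nat -> nat) (D : seq nat) w1 w2 :
  {in D &, {mono f : x y / x < y}} -> {subset w1 <= D} ->
  knuth_equiv w1 w2 -> knuth_equiv (map f w1) (map f w2).
Proof.
move=> hm hs h.
apply: (@crst_gen2 knuth_step knuth_step (fun w => {subset w <= D}) (map f) _ _ w1 w2 h hs).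
- move=> u v /knuth_perm hp; split => hu x hx; apply: hu; by rewrite ?(perm_mem hp) // -(perm_mem hp).
- move=> u v huv hu; apply: rst_step; exact: knuth_map hm hu huv.
Qed.

Lemma sk_equiv_appr v w1 w2 : sknuth_equiv w1 w2 -> sknuth_equiv (w1 ++ v) (w2 ++ v).
Proof.
move=> h; apply: (@crst_gen2 sknuth_step sknuth_step (fun _ => True) (cat^~ v) _ _ w1 w2 h I).
- by [].
- move=> u u' huv _; apply: rst_step; exact: sk_appr.
Qed.

Lemma knuth_equiv_appl v w1 w2 : knuth_equiv w1 w2 -> sknuth_equiv (v ++ w1) (v ++ w2).
Proof.
move=> h; apply: (@crst_gen2 knuth_step sknuth_step (fun _ => True) (cat v) _ _ w1 w2 h I).
- by [].
- move=> u u' huv _; apply: rst_step; apply: SKK; exact: knuth_appl.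
Qed.

Lemma knuth_sk w1 w2 : knuth_equiv w1 w2 -> sknuth_equiv w1 w2.
Proof.
move=> h; apply: (@crst_gen2 knuth_step sknuth_step (fun _ => True) id _ _ w1 w2 h I).
- by [].
- move=> u u' huv _; apply: rst_step; exact: SKK.
Qed.

Lemma sk_equiv_filter (P : pred nat) w1 w2 : convex P ->
  sknuth_equiv w1 w2 -> sknuth_equiv (filter P w1) (filter P w2).
Proof.
move=> hc h; apply: (@crst_gen2 sknuth_step sknuth_step (fun _ => True) (filter P) _ _ w1 w2 h I).
- by [].
- move=> u u' huv _; case: (sk_filter hc huv) => [->|hs]; [exact: rst_refl | exact: rst_step].
Qed.

Lemma sk_equiv_st w1 w2 : uniq w1 -> sknuth_equiv w1 w2 -> sknuth_equiv (st w1) (st w2).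
Proof.
move=> u1 h; have hp := sk_equiv_perm h.
have u2 : uniq w2 by rewrite -(perm_uniq hp).
rewrite (st_uniq u1) (st_uniq u2) -(eq_map (rk_perm hp)).
exact: sk_equiv_map (@rk_mono w1) (fun x hx => hx) h.
Qed.



Lemma mem_words n k s :
  (s \in words n k) = (size s == n) && all (fun i => i \in iota 1 k) s.
Proof.
elim: n s => [|n IH] [|a s] //=.
- by apply/negbTE/allpairsP => -[[i t] /= [_ _]].
- rewrite eqSS; apply/allpairsP/idP => [[[i t] /= [hi ht [-> ->]]]|].
    by rewrite hi -IH ht.
  move=> /andP[hs /andP[ha hall]]; exists (a, s); split => //=.
  by rewrite IH hs.
Qed.

Lemma uniq_words n k : uniq (words n k).
Proof.
elim: n => [|n IH] //=; apply: allpairs_uniq => //; first exact: iota_uniq.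
by move=> [i t] [i' t'] _ _ /= [-> ->].
Qed.

Lemma size_words n k s : s \in words n k -> size s = n.
Proof. by rewrite mem_words => /andP[/eqP]. Qed.

Lemma alph_uniq s N : alph_is s N -> size s = N -> uniq s.
Proof.
move=> /andP[/allP h1 _] hs; apply: (leq_size_uniq (iota_uniq 1 N)) => //.
by rewrite size_iota hs.
Qed.

Lemma alph_perm s N : alph_is s N -> size s = N -> is_perm s.
Proof.
move=> ha hs; have us := alph_uniq ha hs.
move: ha => /andP[_ h2]; rewrite /is_perm; apply: (perm_iota1 us erefl); by rewrite hs.
Qed.

Lemma perm_alph s t N : perm_eq s t -> alph_is s N = alph_is t N.
Proof.
move=> hp; rewrite /alph_is (perm_all _ hp); congr andb.
by apply: eq_all => i; rewrite (perm_mem hp).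
Qed.

Lemma is_perm_perm s t : is_perm s -> perm_eq s t -> is_perm t.
Proof.
move=> hs hp; rewrite /is_perm -(perm_size hp).
by apply: perm_trans hs; rewrite perm_sym.
Qed.


Import GRing.Theory.
Local Open Scope ring_scope.

Lemma coeffMz' (K : choiceType) (a : K) (x : {freeg K / int}) (c : int) :
  coeff a (x *~ c) = coeff a x * c.
Proof. by rewrite -mulrzz; apply: (raddfMz (coeff a)). Qed.

Section Lin.
Variables (K : choiceType) (V : zmodType).
Definition Lin (F : K -> V) (x : {freeg K / int}) : V :=
  \sum_(a <- dom x) F a *~ coeff a x.

Lemma Lin_sup F x s : uniq s -> {subset dom x <= s} ->
  Lin F x = \sum_(a <- s) F a *~ coeff a x.
Proof.
move=> us hs; rewrite /Lin -(perm_big _ (permEl (perm_filterC (fun a => a \in dom x) s))).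
rewrite big_cat /= [X in _ + X]big1_seq ?addr0; last first.
  move=> a /andP[_]; rewrite mem_filter /= => /andP[ha _].
  by rewrite coeff_outdom // mulr0z.
apply: perm_big; apply: uniq_perm; [exact: uniq_dom | exact: filter_uniq | ].
by move=> a; rewrite mem_filter; case: (boolP (a \in dom x)) => //= /hs ->.
Qed.

Lemma LinD F x y : Lin F (x + y) = Lin F x + Lin F y.
Proof.
have us := undup_uniq (dom x ++ dom y).
rewrite (Lin_sup F (x:=x + y) us); last by move=> a /domD_subset; rewrite mem_undup.
rewrite (Lin_sup F (x:=x) us); last by move=> a ha; rewrite mem_undup mem_cat ha.
rewrite (Lin_sup F (x:=y) us); last by move=> a ha; rewrite mem_undup mem_cat ha orbT.
rewrite -big_split; apply: eq_bigr => a _; by rewrite coeffD mulrzDr.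
Qed.

Lemma LinZ F x c : Lin F (x *~ c) = Lin F x *~ c.
Proof.
rewrite (Lin_sup F (x:=x *~ c) (uniq_dom x)); last first.
  move=> a; rewrite !mem_dom coeffMz'; move: (coeff a x) => z; case: (z =P 0) => [->|hz _]; [by rewrite mul0r eqxx | exact/eqP].
rewrite /Lin mulrz_suml; apply: eq_bigr => a _; by rewrite coeffMz' mulrzA.
Qed.

Lemma Lin0 F : Lin F 0 = 0.
Proof. by rewrite /Lin dom0 big_nil. Qed.

Lemma LinB F x y : Lin F (x - y) = Lin F x - Lin F y.
Proof. by rewrite LinD -[- y]mulrN1z LinZ mulrN1z. Qed.

Lemma LinU F k : Lin F << k >> = F k.
Proof. by rewrite /Lin domU1 big_seq1 coeffU mul1r eqxx mulr1z. Qed.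

Lemma Lin_span F (s : seq (int * K * K)) :
  Lin F (\sum_(t <- s) (<< t.1.2 >> - << t.2 >>) *~ t.1.1) =
  \sum_(t <- s) (F t.1.2 - F t.2) *~ t.1.1.
Proof.
elim: s => [|t s IH]; first by rewrite !big_nil Lin0.
by rewrite !big_cons LinD IH LinZ LinB !LinU.
Qed.

Lemma LinFB F G x : Lin (fun a => F a - G a) x = Lin F x - Lin G x.
Proof. by rewrite /Lin -sumrB; apply: eq_bigr => a _; rewrite mulrzBl. Qed.
End Lin.

Lemma mulZS_Lin x y : mulZS x y = Lin (fun a => Lin (mul_basis a) y) x.
Proof.
rewrite /mulZS /Lin; apply: eq_bigr => a _; rewrite mulrz_suml.
by apply: eq_bigr => b _; rewrite mulrC mulrzA.
Qed.

Section Span.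
Variable R : seq nat -> seq nat -> Prop.

Lemma span0 : in_span R 0.
Proof. by exists [::]; split => //; rewrite big_nil. Qed.

Lemma span_add x y : in_span R x -> in_span R y -> in_span R (x + y).
Proof.
move=> [s1 [h1 ->]] [s2 [h2 ->]]; exists (s1 ++ s2); split; last by rewrite big_cat.
by move=> t; rewrite mem_cat => /orP[/h1|/h2].
Qed.

Lemma span_scale x c : in_span R x -> in_span R (x *~ c).
Proof.
move=> [s [h ->]]; exists (map (fun t => (t.1.1 * c, t.1.2, t.2)) s); split.
  by move=> t /mapP [t' ht' ->] /=; exact: h ht'.
by rewrite big_map mulrz_suml; apply: eq_bigr => t _ /=; rewrite mulrzA.
Qed.

Lemma span_sum (I : Type) (r : seq I) (P : pred I) (F : I -> ZS) :
  (forall i, P i -> in_span R (F i)) -> in_span R (\sum_(i <- r | P i) F i).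
Proof.
move=> h; apply: (big_ind (in_span R)); [exact: span0 | exact: span_add | exact: h].
Qed.

Lemma span_gen u v : gen_pair R u v -> in_span R (<< u >> - << v >>).
Proof. by move=> h; exists [:: (1, u, v)]; split; [move=> t; rewrite inE => /eqP -> | rewrite big_seq1 mulr1z]. Qed.
End Span.

Section Span2.
Variable R : seq nat -> seq nat -> Prop.
Notation K2 := (in_JtensZS_plus_ZStensJ R).

Lemma K2_0 : K2 0.
Proof. by exists [::], [::]; split => //; split => //; rewrite !big_nil addr0. Qed.

Lemma K2_add x y : K2 x -> K2 y -> K2 (x + y).
Proof.
move=> [s1 [s2 [h1 [h2 ->]]]] [t1 [t2 [g1 [g2 ->]]]].
exists (s1 ++ t1), (s2 ++ t2); split; first by move=> t; rewrite mem_cat => /orP[/h1|/g1].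
split; first by move=> t; rewrite mem_cat => /orP[/h2|/g2].
rewrite !big_cat /=.
by rewrite addrACA.
Qed.

Lemma K2_scale x c : K2 x -> K2 (x *~ c).
Proof.
move=> [s1 [s2 [h1 [h2 ->]]]].
exists (map (fun t => (t.1.1 * c, t.1.2, t.2)) s1), (map (fun t => (t.1.1 * c, t.1.2, t.2)) s2).
split; first by move=> t /mapP [t' ht' ->] /=; exact: h1 ht'.
split; first by move=> t /mapP [t' ht' ->] /=; exact: h2 ht'.
rewrite !big_map mulrzDl !mulrz_suml.
by congr (_ + _); apply: eq_bigr => t _ /=; rewrite mulrzA.
Qed.

Lemma K2_sum (I : Type) (r : seq I) (P : pred I) (F : I -> ZS2) :
  (forall i, P i -> K2 (F i)) -> K2 (\sum_(i <- r | P i) F i).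
Proof.
move=> h; apply: (big_ind K2); [exact: K2_0 | exact: K2_add | exact: h].
Qed.

Lemma K2_gen A A' B B' : gen_pair R A A' -> gen_pair R B B' -> is_perm B -> is_perm A' ->
  K2 (<< (A, B) >> - << (A', B') >>).
Proof.
move=> hA hB pB pA'.
exists [:: (1, (A, A'), B)], [:: (1, (B, B'), A')].
split; first by move=> t; rewrite inE => /eqP ->.
split; first by move=> t; rewrite inE => /eqP ->.
rewrite !big_seq1 /= !mulr1z.
by rewrite addrA subrK.
Qed.
End Span2.


Import GRing.Theory.
Local Open Scope ring_scope.

Definition Pa (a u : seq nat) : bool := (st u == a) && uniq u.

Lemma cond_uniq p q u v : u \in words p (p + q) -> v \in words q (p + q) ->
  alph_is (u ++ v) (p + q) -> uniq u && uniq v.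
Proof.
move=> hu hv ha.
have : uniq (u ++ v) by apply: (alph_uniq ha); rewrite size_cat (size_words hu) (size_words hv).
by rewrite cat_uniq => /and3P[-> _ ->].
Qed.

Lemma mb_full a b : mul_basis a b =
  \sum_(u <- words (size a) (size a + size b))
    \sum_(v <- words (size b) (size a + size b))
      (if [&& st u == a, st v == b & alph_is (u ++ v) (size a + size b)]
       then << u ++ v >> else 0).
Proof. rewrite /mul_basis /=; apply: eq_bigr => u _; exact: big_mkcond. Qed.

Lemma mb_left a b : mul_basis a b =
  \sum_(u <- words (size a) (size a + size b) | Pa a u)
    \sum_(v <- words (size b) (size a + size b) | (st v == b) && alph_is (u ++ v) (size a + size b))
      << u ++ v >>.
Proof.
rewrite mb_full [RHS]big_mkcond; apply: eq_big_seq => u hu /=.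
rewrite /Pa; case: (st u == a) => /=; last by rewrite big1.
case: (boolP (uniq u)) => hu' /=.
  by rewrite [RHS]big_mkcond.
rewrite big1_seq // => v /andP[_ hv]; case ha: (alph_is _ _); last by rewrite andbF.
by have := cond_uniq hu hv ha; rewrite (negbTE hu').
Qed.

Lemma mb_right a b : mul_basis a b =
  \sum_(v <- words (size b) (size a + size b) | Pa b v)
    \sum_(u <- words (size a) (size a + size b) | (st u == a) && alph_is (u ++ v) (size a + size b))
      << u ++ v >>.
Proof.
rewrite mb_full exchange_big [RHS]big_mkcond; apply: eq_big_seq => v hv /=.
rewrite /Pa; case: (st v == b) => /=; last by rewrite big1 // => u _; rewrite andbF.
case: (boolP (uniq v)) => hv' /=.
  by rewrite [RHS]big_mkcond.
rewrite big1_seq // => u /andP[_ hu]; case ha: (alph_is _ _); last by rewrite !andbF.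
by have := cond_uniq hu hv ha; rewrite (negbTE hv') andbF.
Qed.

Lemma phi_words p N y c : y \in words p N -> uniq y -> is_perm c -> size c = size y ->
  phi c y \in words p N.
Proof.
move=> hy uy hc sc; have hp := phi_perm uy hc sc.
by rewrite mem_words (perm_size hp) (perm_all _ hp) -mem_words.
Qed.

Lemma reindexP p N a a' (T : seq nat -> ZS) : is_perm a -> is_perm a' ->
  size a = p -> size a' = p ->
  \sum_(u <- words p N | Pa a' u) T u = \sum_(u <- words p N | Pa a u) T (phi a' u).
Proof.
move=> ha ha' sa sa'.
rewrite -big_filter -[RHS]big_filter -(big_map (phi a') xpredT T).
apply: perm_big; apply: uniq_perm.
- exact/filter_uniq/uniq_words.
- rewrite map_inj_in_uniq; first exact/filter_uniq/uniq_words.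
  move=> x y; rewrite !mem_filter /Pa => /andP[/andP[/eqP sx ux] hx] /andP[/andP[/eqP sy uy] hy] e.
  have ex : phi a (phi a' x) = x.
    rewrite (phi_phi ux ha' _ ha) ?(size_words hx) // -{1}sx; exact: phi_st.
  have ey : phi a (phi a' y) = y.
    rewrite (phi_phi uy ha' _ ha) ?(size_words hy) // -{1}sy; exact: phi_st.
  by rewrite -ex -ey e.
- move=> x; apply/idP/mapP.
  + rewrite mem_filter /Pa => /andP[/andP[/eqP sx ux] hx].
    have sxp : size a = size x by rewrite (size_words hx).
    exists (phi a x).
      rewrite mem_filter /Pa st_phi // eqxx (perm_uniq (phi_perm ux ha sxp)) ux /=.
      exact: phi_words.
    rewrite (phi_phi ux ha _ ha') ?(size_words hx) // -{1}sx; by rewrite phi_st.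
  + move=> [y]; rewrite mem_filter /Pa => /andP[/andP[/eqP sy uy] hy] ->.
    have syp : size a' = size y by rewrite (size_words hy).
    rewrite mem_filter /Pa st_phi // eqxx (perm_uniq (phi_perm uy ha' syp)) uy /=.
    exact: phi_words.
Qed.


Import GRing.Theory.
Local Open Scope ring_scope.

Lemma JR a a' b : is_perm a -> is_perm a' -> size a = size a' ->
  sknuth_equiv a a' -> J_SK (mul_basis a b - mul_basis a' b).
Proof.
move=> ha ha' s h.
rewrite (mb_left a b) (mb_left a' b) -s (@reindexP _ _ a a' _ ha ha' erefl (esym s)) -sumrB.
rewrite big_seq_cond; apply: span_sum => u /andP[hu /andP[/eqP sx ux]].
have su : size u = size a by rewrite (size_words hu).
have hp : perm_eq (phi a' u) u by apply: phi_perm; rewrite // -s.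
have -> : \sum_(v <- words (size b) (size a + size b) | (st v == b) && alph_is (phi a' u ++ v) (size a + size b)) (<< phi a' u ++ v >> : ZS) =
   \sum_(v <- words (size b) (size a + size b) | (st v == b) && alph_is (u ++ v) (size a + size b)) (<< phi a' u ++ v >> : ZS).
  by apply: eq_bigl => v; rewrite (perm_alph _ (_ : perm_eq (phi a' u ++ v) (u ++ v))) // perm_cat2r.
rewrite -sumrB big_seq_cond; apply: span_sum => v /andP[hv /andP[_ hal]]; apply: span_gen.
have sv : size v = size b by rewrite (size_words hv).
have pu : is_perm (u ++ v) by apply: (alph_perm hal); rewrite size_cat su sv.
have hp2 : perm_eq (u ++ v) (phi a' u ++ v) by rewrite perm_cat2r perm_sym.
split => //.
- exact: is_perm_perm pu hp2.
- exact: perm_size hp2.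
- have eu : phi a u = u by rewrite -sx phi_st.
  rewrite -{1}eu; apply: sk_equiv_appr; rewrite /phi.
  apply: sk_equiv_map (ur_mono ux) (sub_st ux ha (esym su)) h.
Qed.

Lemma JL a b b' : is_perm b -> is_perm b' -> size b = size b' ->
  knuth_equiv b b' -> J_SK (mul_basis a b - mul_basis a b').
Proof.
move=> hb hb' s h.
rewrite (mb_right a b) (mb_right a b') -s (@reindexP _ _ b b' _ hb hb' erefl (esym s)) -sumrB.
rewrite big_seq_cond; apply: span_sum => v /andP[hv /andP[/eqP sx ux]].
have sv : size v = size b by rewrite (size_words hv).
have hp : perm_eq (phi b' v) v by apply: phi_perm; rewrite // -s.
have -> : \sum_(u <- words (size a) (size a + size b) | (st u == a) && alph_is (u ++ phi b' v) (size a + size b)) (<< u ++ phi b' v >> : ZS) =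
   \sum_(u <- words (size a) (size a + size b) | (st u == a) && alph_is (u ++ v) (size a + size b)) (<< u ++ phi b' v >> : ZS).
  by apply: eq_bigl => u; rewrite (perm_alph _ (_ : perm_eq (u ++ phi b' v) (u ++ v))) // perm_cat2l.
rewrite -sumrB big_seq_cond; apply: span_sum => u /andP[hu /andP[_ hal]]; apply: span_gen.
have su : size u = size a by rewrite (size_words hu).
have pu : is_perm (u ++ v) by apply: (alph_perm hal); rewrite size_cat su sv.
have hp2 : perm_eq (u ++ v) (u ++ phi b' v) by rewrite perm_cat2l perm_sym.
split => //.
- exact: is_perm_perm pu hp2.
- exact: perm_size hp2.
- have ev : phi b v = v by rewrite -sx phi_st.
  rewrite -{1}ev; apply: knuth_equiv_appl; rewrite /phi.
  apply: knuth_equiv_map (ur_mono ux) (sub_st ux hb (esym sv)) h.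
Qed.


Import GRing.Theory.
Local Open Scope ring_scope.

Lemma Lin_J (R : seq nat -> seq nat -> Prop) (F : seq nat -> ZS) (x : ZS) :
  (forall a, in_span R (F a)) -> in_span R (Lin F x).
Proof. move=> h; rewrite /Lin; apply: span_sum => a _; exact/span_scale/h. Qed.

Lemma convex_le i : convex (fun a => (a <= i)%N).
Proof. move=> a b c ab bc _ ci; apply: leq_trans ci; exact: ltnW. Qed.

Lemma convex_gt i : convex (fun a => (i < a)%N).
Proof. move=> a b c ab bc ia _; exact: ltn_trans ia ab. Qed.

Lemma gen_restr (P : pred nat) u u' : convex P -> gen_pair sknuth_equiv u u' ->
  gen_pair sknuth_equiv (st (filter P u)) (st (filter P u')).
Proof.
move=> hc [pu pu' s h]; have hp := sk_equiv_perm h.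
have uu := is_perm_uniq pu; have uu' := is_perm_uniq pu'.
split.
- exact/st_perm/filter_uniq.
- exact/st_perm/filter_uniq.
- by rewrite !size_st; apply: perm_size; apply: perm_filter.
- apply: sk_equiv_st; first exact: filter_uniq.
  exact: sk_equiv_filter hc h.
Qed.

Lemma cop_diff u u' : gen_pair sknuth_equiv u u' ->
  in_JtensZS_plus_ZStensJ sknuth_equiv (cop_basis u - cop_basis u').
Proof.
move=> g; have g' := g; case: g' => pu pu' s h.
have uu := is_perm_uniq pu; have uu' := is_perm_uniq pu'.
rewrite /cop_basis -s -sumrB; apply: K2_sum => i _; rewrite /restr_le /restr_gt; apply: K2_gen.
- exact: (@gen_restr (fun a => (a <= i)%N) u u' (@convex_le i) g).
- exact: (@gen_restr (fun a => (i < a)%N) u u' (@convex_gt i) g).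
- exact/st_perm/filter_uniq.
- exact/st_perm/filter_uniq.
Qed.

Lemma counit_span (s : seq (int * seq nat * seq nat)) :
  (forall t, t \in s -> gen_pair sknuth_equiv t.1.2 t.2) ->
  coeff [::] (\sum_(t <- s) (<< t.1.2 >> - << t.2 >>) *~ t.1.1 : ZS) = 0.
Proof.
elim: s => [|t s IH] hs; first by rewrite big_nil coeff0.
rewrite big_cons coeffD coeffMz' coeffB !coeffU IH; last by move=> t' ht'; apply: hs; rewrite inE ht' orbT.
have [_ _ e _] := hs t (mem_head _ _).
by rewrite -!size_eq0 e subrr mul0r addr0.
Qed.


Import GRing.Theory.
Local Open Scope ring_scope.

Lemma copZS_Lin x : copZS x = Lin cop_basis x.
Proof. by []. Qed.

Theorem theorem4p1 :
  right_ideal J_SK /\ coideal sknuth_equiv /\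
  (forall x, J_K x -> J_SK x) /\
  (forall x y, inZS x -> J_K y -> J_SK (mulZS x y)).
Proof.
split; [|split; [|split]].
- split; first exact: span_add.
  split; first exact: span0.
  split; first by move=> x c; exact: span_scale.
  move=> x y [s [hs ->]] _.
  rewrite mulZS_Lin Lin_span big_seq_cond; apply: span_sum => t /andP[ht _].
  apply: span_scale; rewrite -LinFB; apply: Lin_J => b.
  case: (hs t ht) => pu pu' e h; exact: JR.
- split.
  + move=> x [s [hs ->]].
    rewrite copZS_Lin Lin_span big_seq_cond.
    apply: K2_sum => t /andP[ht _]; apply: K2_scale; exact: cop_diff (hs t ht).
  + move=> x [s [hs ->]]; exact: counit_span.
- move=> x [s [hs ->]]; exists s; split => // t ht.
  by case: (hs t ht) => pu pu' e h; split => //; exact: knuth_sk.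
- move=> x y _ [s [hs ->]].
  rewrite mulZS_Lin; apply: Lin_J => a; rewrite Lin_span big_seq_cond.
  apply: span_sum => t /andP[ht _]; apply: span_scale.
  case: (hs t ht) => pu pu' e h; exact: JL.
Qed.
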